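(* Let $\gamma_*>0$ and let $\Phi$ denote the standard normal CDF. Define \[ t_+=\tfrac32\gamma_*+\tfrac{1}{\gamma_*}\log\left(1-\sqrt{1-e^{-\gamma_*}}\right),\qquad t_-=\tfrac32\gamma_*+\tfrac{1}{\gamma_*}\log\left(1+\sqrt{1-e^{-\gamma_*}}\right), \] and for $x\neq 0$ \[ \tilde h(x)=\frac{\Phi(t_--x)-\Phi(t_-)}{\Phi(t_+-x)-\Phi(t_+)}. \] Let $k=e^{-\frac12(t_--2\gamma_* )^2+\frac12(t_+-2\gamma_* )^2}$ and $c=\frac{k}{1+k}$. Then $\tilde h(x)\le\frac{c}{1-c}$ for all $x<0$. *)

(* Defs.v *)
From Stdlib Require Import Reals Lra.
From Coquelicot Require Import Coquelicot.
Open Scope R_scope.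

Definition std_normal_pdf (t : R) : R := exp (- t ^ 2 / 2) / sqrt (2 * PI).

Definition Phi (x : R) : R :=
  RInt_gen std_normal_pdf (Rbar_locally m_infty) (at_point x).

Definition t_plus (g : R) : R :=
  3 / 2 * g + / g * ln (1 - sqrt (1 - exp (- g))).
Definition t_minus (g : R) : R :=
  3 / 2 * g + / g * ln (1 + sqrt (1 - exp (- g))).

Definition h_tilde (g x : R) : R :=
  (Phi (t_minus g - x) - Phi (t_minus g)) / (Phi (t_plus g - x) - Phi (t_plus g)).

Definition k_const (g : R) : R :=
  exp (- / 2 * (t_minus g - 2 * g) ^ 2 + / 2 * (t_plus g - 2 * g) ^ 2).

Definition c_const (g : R) : R := k_const g / (1 + k_const g).

(* Main.v *)
Require Import Defs.
From Stdlib Require Import Reals Lra Classical.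
From Coquelicot Require Import Coquelicot.
Open Scope R_scope.

Lemma sq2pi_pos : 0 < sqrt (2 * PI).
Proof. apply sqrt_lt_R0. generalize PI_RGT_0; lra. Qed.

Lemma pdf_cont : forall t, continuous std_normal_pdf t.
Proof.
  intro t. apply (@ex_derive_continuous R_AbsRing R_NormedModule). unfold std_normal_pdf.
  auto_derive. generalize sq2pi_pos; lra.
Qed.

Lemma pdf_ex : forall a b, ex_RInt std_normal_pdf a b.
Proof. intros; apply (@ex_RInt_continuous R_CompleteNormedModule); intros; apply pdf_cont. Qed.

Lemma pdf_pos : forall t, 0 < std_normal_pdf t.
Proof.
  intro t. unfold std_normal_pdf. apply Rdiv_lt_0_compat. apply exp_pos. apply sq2pi_pos.
Qed.

Definition psi (t : R) := exp (t + / 2) / sqrt (2 * PI).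

Lemma pdf_le_psi : forall t, std_normal_pdf t <= psi t.
Proof.
  intro t. unfold std_normal_pdf, psi. unfold Rdiv.
  apply Rmult_le_compat_r. left; apply Rinv_0_lt_compat, sq2pi_pos.
  destruct (Req_dec (- t ^ 2 * / 2) (t + /2)) as [E|E]. rewrite E; lra.
  left; apply exp_increasing.
  assert (Hs: 0 <= (t+1)^2) by (apply pow2_ge_0).
  assert (Hq: - t ^ 2 * / 2 <= t + /2) by nra. lra.
Qed.

Lemma psi_int : forall a b, is_RInt psi a b (psi b - psi a).
Proof.
  intros a b. apply (is_RInt_derive psi psi).
  - intros x _. unfold psi. auto_derive. auto. field. generalize sq2pi_pos; lra.
  - intros x _. apply (@ex_derive_continuous R_AbsRing R_NormedModule). unfold psi. auto_derive.
    generalize sq2pi_pos; lra.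
Qed.

Definition G (b a : R) := RInt std_normal_pdf a b.

Lemma G_mono : forall b a1 a2, a1 <= a2 -> G b a2 <= G b a1.
Proof.
  intros b a1 a2 H. unfold G.
  rewrite <- (RInt_Chasles std_normal_pdf a1 a2 b) by apply pdf_ex.
  assert (0 <= RInt std_normal_pdf a1 a2).
  { apply RInt_ge_0; auto. apply pdf_ex. intros; left; apply pdf_pos. }
  change (plus ?x ?y) with (x + y). lra.
Qed.

Lemma G_bound : forall b a, a <= b -> G b a <= psi b.
Proof.
  intros b a H. unfold G.
  apply Rle_trans with (RInt psi a b).
  apply RInt_le; auto. apply pdf_ex. eexists; apply psi_int.
  intros; apply pdf_le_psi.
  rewrite (is_RInt_unique _ _ _ _ (psi_int a b)).
  assert (0 < psi a). { unfold psi. apply Rdiv_lt_0_compat. apply exp_pos. apply sq2pi_pos. }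
  lra.
Qed.

Lemma Phi_gen : forall b, exists l, is_RInt_gen std_normal_pdf (Rbar_locally m_infty) (at_point b) l.
Proof.
  intro b.
  set (E := fun y => exists a, a <= b /\ y = G b a).
  destruct (completeness E) as [l [Hub Hl]].
  { exists (psi b). intros y [a [Ha ->]]. apply G_bound; auto. }
  { exists (G b b). exists b; split; auto; lra. }
  exists l. intros P [eps Heps].
  destruct (classic (exists a0, a0 <= b /\ l - eps < G b a0)) as [[a0 [Ha0 Hg]]|NE].
  2:{ exfalso. assert (l <= l - eps). apply Hl. intros y [a [Ha ->]].
      apply Rnot_lt_le. intro C. apply NE. exists a; auto.
      destruct eps; simpl in *; lra. }
  apply Filter_prod with (fun a => a < a0) (fun y => y = b).
  - exists a0. auto.
  - reflexivity.
  - intros x y Hx ->. exists (G b x). split.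
    + apply (@RInt_correct R_CompleteNormedModule), pdf_ex.
    + apply Heps. simpl.
      assert (G b x <= l). { apply Hub. exists x; split; lra. }
      assert (G b a0 <= G b x) by (apply G_mono; lra).
      change (Rabs (G b x - l) < eps). rewrite Rabs_left1 by lra. lra.
Qed.

Lemma Phi_eq : forall x l, is_RInt_gen std_normal_pdf (Rbar_locally m_infty) (at_point x) l -> Phi x = l.
Proof. intros x l H. unfold Phi. apply is_RInt_gen_unique; auto. Qed.

Lemma Phi_diff : forall x y, Phi y - Phi x = RInt std_normal_pdf x y.
Proof.
  intros x y. destruct (Phi_gen x) as [lx Hx].
  assert (H2 : is_RInt_gen std_normal_pdf (at_point x) (at_point y) (RInt std_normal_pdf x y)).
  { apply is_RInt_gen_at_point. apply (@RInt_correct R_CompleteNormedModule), pdf_ex. }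
  pose proof (is_RInt_gen_Chasles _ _ _ _ Hx H2) as H3.
  rewrite (Phi_eq _ _ H3), (Phi_eq _ _ Hx). change (plus ?a ?b) with (a + b). ring.
Qed.

Lemma shift : forall c s, RInt std_normal_pdf c (c + s) = RInt (fun u => std_normal_pdf (c + u)) 0 s.
Proof.
  intros c s. pose proof (RInt_comp_lin std_normal_pdf 1 c 0 s (pdf_ex _ _)) as H.
  replace (1 * 0 + c) with c in H by ring. replace (1 * s + c) with (c + s) in H by ring.
  rewrite <- H. apply RInt_ext. intros x _. change (scal 1 (std_normal_pdf (1 * x + c))) with (1 * std_normal_pdf (1 * x + c)).
  rewrite Rmult_1_l. f_equal. ring.
Qed.

Lemma pointwise : forall g m p u, 0 < g -> p <= m -> 0 <= u ->
  std_normal_pdf (m + u) <=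
  exp (- / 2 * (m - 2 * g) ^ 2 + / 2 * (p - 2 * g) ^ 2) * std_normal_pdf (p + u).
Proof.
  intros g m p u Hg Hpm Hu. unfold std_normal_pdf.
  unfold Rdiv. rewrite <- Rmult_assoc, <- exp_plus.
  apply Rmult_le_compat_r. left; apply Rinv_0_lt_compat, sq2pi_pos.
  destruct (Req_dec (- (m + u) ^ 2 * / 2) (- / 2 * (m - 2 * g) ^ 2 + / 2 * (p - 2 * g) ^ 2 + - (p + u) ^ 2 * / 2)) as [E|E].
  rewrite E; lra.
  left; apply exp_increasing.
  assert (0 <= (m - p) * (2 * u + 4 * g)) by (apply Rmult_le_pos; lra).
  assert (- (m + u) ^ 2 * / 2 <= - / 2 * (m - 2 * g) ^ 2 + / 2 * (p - 2 * g) ^ 2 + - (p + u) ^ 2 * / 2) by nra.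
  lra.
Qed.

Lemma tpm : forall g, 0 < g -> t_plus g <= t_minus g.
Proof.
  intros g Hg. unfold t_plus, t_minus.
  set (a := sqrt (1 - exp (- g))).
  assert (He : 0 < exp (- g) < 1).
  { split. apply exp_pos. rewrite <- exp_0. apply exp_increasing. lra. }
  assert (Ha0 : 0 <= a) by apply sqrt_pos.
  assert (Ha1 : a < 1).
  { unfold a. assert (Hs : sqrt (1 - exp (- g)) < sqrt 1) by (apply sqrt_lt_1_alt; split; lra). rewrite sqrt_1 in Hs. exact Hs. }
  assert (ln (1 - a) <= ln (1 + a)).
  { destruct (Req_dec a 0) as [->|]. right; f_equal; ring.
    left; apply ln_increasing; lra. }
  assert (0 < / g) by (apply Rinv_0_lt_compat; lra).
  apply Rplus_le_compat_l. apply Rmult_le_compat_l; lra.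
Qed.

Theorem lemma8 (g : R) (hg : 0 < g) (x : R) (hx : x < 0) :
  h_tilde g x <= c_const g / (1 - c_const g).
Proof.
  assert (Hk : 0 < k_const g) by apply exp_pos.
  replace (c_const g / (1 - c_const g)) with (k_const g)
    by (unfold c_const; field; lra).
  unfold h_tilde. rewrite !Phi_diff.
  set (s := - x). set (m := t_minus g). set (p := t_plus g).
  replace (m - x) with (m + s) by (unfold s; ring).
  replace (p - x) with (p + s) by (unfold s; ring).
  rewrite !shift.
  assert (Hpm : p <= m) by apply tpm, hg.
  assert (cont : forall c u, continuous (fun u => std_normal_pdf (c + u)) u).
  { intros c u. apply (@ex_derive_continuous R_AbsRing R_NormedModule).
    unfold std_normal_pdf. auto_derive. generalize sq2pi_pos; lra. }
  assert (exc : forall c, ex_RInt (fun u => std_normal_pdf (c + u)) 0 s).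
  { intro c. apply (@ex_RInt_continuous R_CompleteNormedModule). intros; apply cont. }
  assert (HD : 0 < RInt (fun u => std_normal_pdf (p + u)) 0 s).
  { apply RInt_gt_0. unfold s; lra. intros; apply pdf_pos. intros; apply cont. }
  assert (HN : RInt (fun u => std_normal_pdf (m + u)) 0 s <=
               k_const g * RInt (fun u => std_normal_pdf (p + u)) 0 s).
  { rewrite <- (RInt_scal (V := R_CompleteNormedModule)) by apply exc.
    apply RInt_le. unfold s; lra. apply exc.
    apply (@ex_RInt_continuous R_CompleteNormedModule). intros.
    apply (@ex_derive_continuous R_AbsRing R_NormedModule).
    unfold std_normal_pdf, scal; simpl; unfold mult; simpl. auto_derive. generalize sq2pi_pos; lra.
    intros u Hu. change (scal (k_const g) (std_normal_pdf (p + u))) with (k_const g * std_normal_pdf (p + u)).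
    unfold k_const. apply pointwise; auto; lra. }
  unfold Rdiv. apply (Rmult_le_reg_r (RInt (fun u => std_normal_pdf (p + u)) 0 s)); auto.
  rewrite Rmult_assoc, Rinv_l by lra. lra.
Qed.
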